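(* Let $n\geqslant2$. For $\kappa>0$ set $\widetilde\sigma(\kappa)=c(\kappa)/\kappa$ and $\beta=c(\kappa)^2+n\widetilde\sigma(\kappa)-1$. Then $\beta>0$ for every $\kappa>0$.
   Context: $c(\kappa)=\frac{\int_0^\pi\cos\theta\,e^{\kappa\cos\theta}\sin^{n-2}\theta\,\mathrm d\theta}{\int_0^\pi e^{\kappa\cos\theta}\sin^{n-2}\theta\,\mathrm d\theta}$. *)

(* Defs.v *)
From Stdlib Require Import Reals.
From Coquelicot Require Import Coquelicot.
Open Scope R_scope.

Definition c (n : nat) (kappa : R) : R :=
  RInt (fun t => cos t * exp (kappa * cos t) * sin t ^ (n - 2)) 0 PI /
  RInt (fun t => exp (kappa * cos t) * sin t ^ (n - 2)) 0 PI.

Definition sigma_tilde (n : nat) (kappa : R) : R := c n kappa / kappa.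

Definition beta (n : nat) (kappa : R) : R :=
  c n kappa ^ 2 + INR n * sigma_tilde n kappa - 1.

(* Main.v *)
Require Import Defs.
From Stdlib Require Import Reals Lra Lia.
From Coquelicot Require Import Coquelicot.
Open Scope R_scope.

Lemma cder (f : R -> R) x : ex_derive f x -> continuous f x.
Proof. apply (@ex_derive_continuous R_AbsRing R_NormedModule). Qed.
Lemma exc (f : R -> R) a b : (forall z, ex_derive f z) -> ex_RInt f a b.
Proof. intros H; apply (@ex_RInt_continuous R_CompleteNormedModule); intros; apply cder, H. Qed.

Definition Pf (kap : R) (k : nat) (s : R) := exp (kap * cos s) * sin s ^ k.
Definition Qf (kap : R) (k : nat) (s : R) := exp (- (kap * cos s)) * sin s ^ k.
Definition Pa kap k (a : nat) : R := RInt (fun s => Pf kap k s * cos s ^ a) 0 PI.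
Definition Qa kap k (a : nat) : R := RInt (fun s => Qf kap k s * cos s ^ a) 0 PI.

Lemma ex_Pa kap k a : ex_RInt (fun s => Pf kap k s * cos s ^ a) 0 PI.
Proof. apply exc; intros; unfold Pf; auto_derive; auto. Qed.
Lemma ex_Qa kap k a : ex_RInt (fun s => Qf kap k s * cos s ^ a) 0 PI.
Proof. apply exc; intros; unfold Qf; auto_derive; auto. Qed.
Lemma is_Pa kap k a : is_RInt (fun s => Pf kap k s * cos s ^ a) 0 PI (Pa kap k a).
Proof. apply (@RInt_correct R_CompleteNormedModule), ex_Pa. Qed.
Lemma is_Qa kap k a : is_RInt (fun s => Qf kap k s * cos s ^ a) 0 PI (Qa kap k a).
Proof. apply (@RInt_correct R_CompleteNormedModule), ex_Qa. Qed.

Lemma Qa_eq kap k a : Qa kap k a = (-1) ^ a * Pa kap k a.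
Proof.
  set (f := fun s => Pf kap k s * cos s ^ a).
  pose proof (@RInt_comp_lin R_CompleteNormedModule f (-1) PI 0 PI) as H.
  replace (-1 * 0 + PI) with PI in H by ring.
  replace (-1 * PI + PI) with 0 in H by ring.
  specialize (H (ex_RInt_swap _ _ _ (ex_Pa kap k a))).
  rewrite <- (opp_RInt_swap f 0 PI (ex_Pa kap k a)) in H.
  unfold Qa, Pa; fold f.
  rewrite (RInt_ext _ (fun y => scal (- (-1)^a) (scal (-1) (f (-1 * y + PI))))).
  - rewrite (@RInt_scal R_CompleteNormedModule). etransitivity; [apply f_equal; exact H|]. unfold scal, opp; simpl; unfold mult; simpl. ring.
    apply exc; intros; unfold f, Pf, scal; simpl; unfold mult; simpl; auto_derive; auto.
  - intros x _. unfold f, Pf, Qf, scal; simpl; unfold mult; simpl.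
    replace (-1 * x + PI) with (PI - x) by ring. rewrite sin_PI_x, Rtrigo_facts.cos_pi_minus.
    replace (- cos x) with ((-1) * cos x) by ring. rewrite Rpow_mult_distr.
    replace (kap * (-1 * cos x)) with (- (kap * cos x)) by ring.
    replace (- (-1)^a * (-1 * (exp (- (kap * cos x)) * sin x ^ k * ((-1) ^ a * cos x ^ a))))
      with (((-1)^a * (-1)^a) * (exp (- (kap * cos x)) * sin x ^ k * cos x ^ a)) by ring.
    rewrite <- Rpow_mult_distr. replace (-1 * -1) with 1 by ring. rewrite pow1. ring.
Qed.

Lemma lin2 (f g h : R -> R) a b If Ig c d :
  is_RInt f a b If -> is_RInt g a b Ig ->
  (forall x, h x = c * f x + d * g x) -> is_RInt h a b (c * If + d * Ig).
Proof.
  intros Hf Hg Hh.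
  apply (@is_RInt_ext R_NormedModule (fun x => plus (scal c (f x)) (scal d (g x)))).
  - intros x _. rewrite Hh. reflexivity.
  - apply (@is_RInt_plus R_NormedModule); apply (@is_RInt_scal R_NormedModule); assumption.
Qed.

Lemma lin4 (f0 f1 f2 f3 g : R -> R) a b I0 I1 I2 I3 c0 c1 c2 c3 :
  is_RInt f0 a b I0 -> is_RInt f1 a b I1 -> is_RInt f2 a b I2 -> is_RInt f3 a b I3 ->
  (forall x, g x = c0 * f0 x + c1 * f1 x + c2 * f2 x + c3 * f3 x) ->
  is_RInt g a b (c0 * I0 + c1 * I1 + c2 * I2 + c3 * I3).
Proof.
  intros H0 H1 H2 H3 Hg.
  replace (c0 * I0 + c1 * I1 + c2 * I2 + c3 * I3) with
    (1 * (c0 * I0 + c1 * I1) + 1 * (c2 * I2 + c3 * I3)) by ring.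
  apply (lin2 (fun x => c0 * f0 x + c1 * f1 x) (fun x => c2 * f2 x + c3 * f3 x)).
  - apply lin2 with f0 f1; auto.
  - apply lin2 with f2 f3; auto.
  - intros; rewrite Hg; ring.
Qed.

Lemma lin8 (f0 f1 f2 f3 f4 f5 f6 f7 g : R -> R) a b I0 I1 I2 I3 I4 I5 I6 I7 c0 c1 c2 c3 c4 c5 c6 c7 :
  is_RInt f0 a b I0 -> is_RInt f1 a b I1 -> is_RInt f2 a b I2 -> is_RInt f3 a b I3 ->
  is_RInt f4 a b I4 -> is_RInt f5 a b I5 -> is_RInt f6 a b I6 -> is_RInt f7 a b I7 ->
  (forall x, g x = c0 * f0 x + c1 * f1 x + c2 * f2 x + c3 * f3 x
                 + c4 * f4 x + c5 * f5 x + c6 * f6 x + c7 * f7 x) ->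
  is_RInt g a b (c0 * I0 + c1 * I1 + c2 * I2 + c3 * I3 + c4 * I4 + c5 * I5 + c6 * I6 + c7 * I7).
Proof.
  intros H0 H1 H2 H3 H4 H5 H6 H7 Hg.
  replace (c0 * I0 + c1 * I1 + c2 * I2 + c3 * I3 + c4 * I4 + c5 * I5 + c6 * I6 + c7 * I7) with
    (1 * (c0 * I0 + c1 * I1 + c2 * I2 + c3 * I3) + 1 * (c4 * I4 + c5 * I5 + c6 * I6 + c7 * I7)) by ring.
  apply (lin2 (fun x => c0 * f0 x + c1 * f1 x + c2 * f2 x + c3 * f3 x)
              (fun x => c4 * f4 x + c5 * f5 x + c6 * f6 x + c7 * f7 x)).
  - apply lin4 with f0 f1 f2 f3; auto.
  - apply lin4 with f4 f5 f6 f7; auto.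
  - intros; rewrite Hg; ring.
Qed.

Lemma uniq (f : R -> R) a b l1 l2 : is_RInt f a b l1 -> is_RInt f a b l2 -> l1 = l2.
Proof.
  intros H1 H2. rewrite <- (@is_RInt_unique R_CompleteNormedModule f a b l1 H1).
  apply (@is_RInt_unique R_CompleteNormedModule f a b l2 H2).
Qed.

Lemma I1 kap k : -kap * Pa kap k 0 + INR (S k) * Pa kap k 1 + kap * Pa kap k 2 = 0.
Proof.
  set (df := fun s => -kap * (Pf kap k s * cos s ^ 0) + INR (S k) * (Pf kap k s * cos s ^ 1)
     + kap * (Pf kap k s * cos s ^ 2) + 0 * (Pf kap k s * cos s ^ 3)).
  assert (HA : is_RInt df 0 PI (-kap * Pa kap k 0 + INR (S k) * Pa kap k 1 + kap * Pa kap k 2 + 0 * Pa kap k 3)).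
  { apply lin4 with (fun s => Pf kap k s * cos s ^ 0) (fun s => Pf kap k s * cos s ^ 1)
      (fun s => Pf kap k s * cos s ^ 2) (fun s => Pf kap k s * cos s ^ 3); try apply is_Pa.
    intros; reflexivity. }
  assert (HB : is_RInt df 0 PI (minus ((fun s => exp (kap * cos s) * sin s ^ S k) PI)
                                     ((fun s => exp (kap * cos s) * sin s ^ S k) 0))).
  { apply (@is_RInt_derive R_CompleteNormedModule (fun s => exp (kap * cos s) * sin s ^ S k)).
    - intros x _. unfold df, Pf. auto_derive; auto.
      change (match k with 0%nat => 1 | S _ => INR k + 1 end) with (INR (S k)).
      assert (Hs : sin x * sin x = 1 - cos x * cos x) by (pose proof (sin2 x) as Hs; unfold Rsqr in Hs; exact Hs).
      replace (kap * (1 * - sin x) * exp (kap * cos x) * (sin x * sin x ^ k)) with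
        (- kap * exp (kap * cos x) * sin x ^ k * (sin x * sin x)) by ring.
      rewrite Hs. simpl. ring.
    - intros x _. apply cder. unfold df, Pf. auto_derive; auto. }
  pose proof (uniq _ _ _ _ _ HA HB) as E.
  replace (-kap * Pa kap k 0 + INR (S k) * Pa kap k 1 + kap * Pa kap k 2) with
    (- kap * Pa kap k 0 + INR (S k) * Pa kap k 1 + kap * Pa kap k 2 + 0 * Pa kap k 3) by ring.
  rewrite E. simpl. rewrite sin_PI, sin_0.
  unfold minus, plus, opp; simpl. ring.
Qed.

Lemma I2 kap k : -1 * Pa kap k 0 + - kap * Pa kap k 1 + (INR (S k) + 1) * Pa kap k 2 + kap * Pa kap k 3 = 0.
Proof.
  set (df := fun s => -1 * (Pf kap k s * cos s ^ 0) + - kap * (Pf kap k s * cos s ^ 1)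
     + (INR (S k) + 1) * (Pf kap k s * cos s ^ 2) + kap * (Pf kap k s * cos s ^ 3)).
  assert (HA : is_RInt df 0 PI (-1 * Pa kap k 0 + - kap * Pa kap k 1 + (INR (S k) + 1) * Pa kap k 2 + kap * Pa kap k 3)).
  { apply lin4 with (fun s => Pf kap k s * cos s ^ 0) (fun s => Pf kap k s * cos s ^ 1)
      (fun s => Pf kap k s * cos s ^ 2) (fun s => Pf kap k s * cos s ^ 3); try apply is_Pa.
    intros; reflexivity. }
  assert (HB : is_RInt df 0 PI (minus ((fun s => cos s * exp (kap * cos s) * sin s ^ S k) PI)
                                     ((fun s => cos s * exp (kap * cos s) * sin s ^ S k) 0))).
  { apply (@is_RInt_derive R_CompleteNormedModule (fun s => cos s * exp (kap * cos s) * sin s ^ S k)).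
    - intros x _. unfold df, Pf. auto_derive; auto.
      change (match k with 0%nat => 1 | S _ => INR k + 1 end) with (INR (S k)).
      assert (Hs : sin x * sin x = 1 - cos x * cos x) by (pose proof (sin2 x) as Hs; unfold Rsqr in Hs; exact Hs).
      replace ((1 * - sin x * exp (kap * cos x) +
        cos x * (kap * (1 * - sin x) * exp (kap * cos x))) * (sin x * sin x ^ k)) with
        (- (1 + kap * cos x) * exp (kap * cos x) * sin x ^ k * (sin x * sin x)) by ring.
      rewrite Hs. simpl. ring.
    - intros x _. apply cder. unfold df, Pf. auto_derive; auto. }
  pose proof (uniq _ _ _ _ _ HA HB) as E.
  rewrite E. simpl. rewrite sin_PI, sin_0.
  unfold minus, plus, opp; simpl. ring.
Qed.

Definition K kap k s t := (cos s - cos t) ^ 2 * (cos s + cos t) *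
  (Pf kap k s * Pf kap k t - Qf kap k s * Qf kap k t).

Definition Gf kap k t :=
  (Pf kap k t * cos t ^ 0) * Pa kap k 3 + (- (Pf kap k t * cos t ^ 1)) * Pa kap k 2
  + (- (Pf kap k t * cos t ^ 2)) * Pa kap k 1 + (Pf kap k t * cos t ^ 3) * Pa kap k 0
  + (- (Qf kap k t * cos t ^ 0)) * Qa kap k 3 + (Qf kap k t * cos t ^ 1) * Qa kap k 2
  + (Qf kap k t * cos t ^ 2) * Qa kap k 1 + (- (Qf kap k t * cos t ^ 3)) * Qa kap k 0.

Lemma K_int kap k t : is_RInt (fun s => K kap k s t) 0 PI (Gf kap k t).
Proof.
  unfold Gf.
  refine (lin8 (fun s => Pf kap k s * cos s ^ 3) (fun s => Pf kap k s * cos s ^ 2)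
    (fun s => Pf kap k s * cos s ^ 1) (fun s => Pf kap k s * cos s ^ 0)
    (fun s => Qf kap k s * cos s ^ 3) (fun s => Qf kap k s * cos s ^ 2)
    (fun s => Qf kap k s * cos s ^ 1) (fun s => Qf kap k s * cos s ^ 0)
    (fun s => K kap k s t) 0 PI
    (Pa kap k 3) (Pa kap k 2) (Pa kap k 1) (Pa kap k 0) (Qa kap k 3) (Qa kap k 2) (Qa kap k 1) (Qa kap k 0)
    _ _ _ _ _ _ _ _
    (is_Pa _ _ _) (is_Pa _ _ _) (is_Pa _ _ _) (is_Pa _ _ _)
    (is_Qa _ _ _) (is_Qa _ _ _) (is_Qa _ _ _) (is_Qa _ _ _) _).
  intros x; unfold K; ring.
Qed.

Lemma G_int kap k : is_RInt (Gf kap k) 0 PI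
  (Pa kap k 3 * Pa kap k 0 + (- Pa kap k 2) * Pa kap k 1 + (- Pa kap k 1) * Pa kap k 2
   + Pa kap k 0 * Pa kap k 3 + (- Qa kap k 3) * Qa kap k 0 + Qa kap k 2 * Qa kap k 1
   + Qa kap k 1 * Qa kap k 2 + (- Qa kap k 0) * Qa kap k 3).
Proof.
  refine (lin8 (fun s => Pf kap k s * cos s ^ 0) (fun s => Pf kap k s * cos s ^ 1)
    (fun s => Pf kap k s * cos s ^ 2) (fun s => Pf kap k s * cos s ^ 3)
    (fun s => Qf kap k s * cos s ^ 0) (fun s => Qf kap k s * cos s ^ 1)
    (fun s => Qf kap k s * cos s ^ 2) (fun s => Qf kap k s * cos s ^ 3)
    (Gf kap k) 0 PI
    (Pa kap k 0) (Pa kap k 1) (Pa kap k 2) (Pa kap k 3) (Qa kap k 0) (Qa kap k 1) (Qa kap k 2) (Qa kap k 3)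
    _ _ _ _ _ _ _ _
    (is_Pa _ _ _) (is_Pa _ _ _) (is_Pa _ _ _) (is_Pa _ _ _)
    (is_Qa _ _ _) (is_Qa _ _ _) (is_Qa _ _ _) (is_Qa _ _ _) _).
  intros x; unfold Gf; ring.
Qed.

Lemma K_eq kap k s t : K kap k s t = (cos s - cos t) ^ 2 * (sin s ^ k * sin t ^ k) *
  ((cos s + cos t) * (exp (kap * (cos s + cos t)) - exp (- (kap * (cos s + cos t))))).
Proof.
  unfold K, Pf, Qf.
  replace (kap * (cos s + cos t)) with (kap * cos s + kap * cos t) by ring.
  replace (- (kap * cos s + kap * cos t)) with (- (kap * cos s) + - (kap * cos t)) by ring.
  rewrite !exp_plus. ring.
Qed.

Lemma expd kap u : 0 < kap -> 0 <= u * (exp (kap * u) - exp (- (kap * u))).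
Proof.
  intros Hk. destruct (Rtotal_order u 0) as [H|[H|H]].
  - assert (exp (kap * u) < exp (- (kap * u))) by (apply exp_increasing; nra). nra.
  - subst; lra.
  - assert (exp (- (kap * u)) < exp (kap * u)) by (apply exp_increasing; nra). nra.
Qed.

Lemma K_nn kap k s t : 0 < kap -> 0 <= s <= PI -> 0 <= t <= PI -> 0 <= K kap k s t.
Proof.
  intros Hk Hs Ht. rewrite K_eq.
  apply Rmult_le_pos; [apply Rmult_le_pos|].
  - apply pow2_ge_0.
  - apply Rmult_le_pos; apply pow_le; apply sin_ge_0; lra.
  - apply expd; auto.
Qed.

Lemma K_pos kap k s t : 0 < kap -> 0 < s -> s < t -> t < PI / 2 -> 0 < K kap k s t.
Proof.
  intros Hk Hs Hst Ht. pose proof PI_RGT_0.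
  assert (Hc : cos t < cos s) by (apply cos_decreasing_1; lra).
  assert (Hy : 0 < cos t) by (apply cos_gt_0; lra).
  assert (0 < sin s) by (apply sin_gt_0; lra).
  assert (0 < sin t) by (apply sin_gt_0; lra).
  rewrite K_eq.
  assert (exp (- (kap * (cos s + cos t))) < exp (kap * (cos s + cos t))) by (apply exp_increasing; nra).
  apply Rmult_lt_0_compat; [apply Rmult_lt_0_compat|].
  - apply pow_lt; lra.
  - apply Rmult_lt_0_compat; apply pow_lt; lra.
  - apply Rmult_lt_0_compat; lra.
Qed.

Lemma G_nn kap k t : 0 < kap -> 0 <= t <= PI -> 0 <= Gf kap k t.
Proof.
  intros Hk Ht. pose proof PI_RGT_0.
  rewrite <- (@is_RInt_unique R_CompleteNormedModule _ _ _ _ (K_int kap k t)).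
  apply RInt_ge_0; [lra| |].
  - apply exc; intros; unfold K, Pf, Qf; auto_derive; auto.
  - intros; apply K_nn; lra.
Qed.

Lemma G_pos kap k t : 0 < kap -> 0 < t < PI / 2 -> 0 < Gf kap k t.
Proof.
  intros Hk Ht. pose proof PI_RGT_0.
  rewrite <- (@is_RInt_unique R_CompleteNormedModule _ _ _ _ (K_int kap k t)).
  rewrite <- (@RInt_Chasles R_CompleteNormedModule _ 0 t PI).
  2,3: apply exc; intros; unfold K, Pf, Qf; auto_derive; auto.
  unfold plus; simpl.
  assert (0 < RInt (fun s => K kap k s t) 0 t).
  { apply RInt_gt_0; [lra| |].
    - intros; apply K_pos; lra.
    - intros; apply cder; unfold K, Pf, Qf; auto_derive; auto. }
  assert (0 <= RInt (fun s => K kap k s t) t PI).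
  { apply RInt_ge_0; [lra| |].
    - apply exc; intros; unfold K, Pf, Qf; auto_derive; auto.
    - intros; apply K_nn; lra. }
  lra.
Qed.

Lemma main_ineq kap k : 0 < kap -> 0 < Pa kap k 0 * Pa kap k 3 - Pa kap k 1 * Pa kap k 2.
Proof.
  intros Hk. pose proof PI_RGT_0.
  pose proof (@is_RInt_unique R_CompleteNormedModule _ _ _ _ (G_int kap k)) as E.
  rewrite !Qa_eq in E. simpl in E.
  assert (0 < RInt (Gf kap k) 0 PI).
  { rewrite <- (@RInt_Chasles R_CompleteNormedModule _ 0 (PI/2) PI).
    2,3: apply exc; intros; unfold Gf, Pf, Qf; auto_derive; auto.
    unfold plus; simpl.
    assert (0 < RInt (Gf kap k) 0 (PI/2)).
    { apply RInt_gt_0; [lra| |].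
      - intros; apply G_pos; lra.
      - intros; apply cder; unfold Gf, Pf, Qf; auto_derive; auto. }
    assert (0 <= RInt (Gf kap k) (PI/2) PI).
    { apply RInt_ge_0; [lra| |].
      - apply exc; intros; unfold Gf, Pf, Qf; auto_derive; auto.
      - intros; apply G_nn; lra. }
    lra. }
  rewrite E in H0. lra.
Qed.

Lemma P0_pos kap k : 0 < Pa kap k 0.
Proof.
  pose proof PI_RGT_0. unfold Pa.
  apply RInt_gt_0; [lra| |].
  - intros; unfold Pf; simpl. rewrite Rmult_1_r. apply Rmult_lt_0_compat.
    apply exp_pos. apply pow_lt, sin_gt_0; lra.
  - intros; apply cder; unfold Pf; auto_derive; auto.
Qed.

Theorem lemma2 (n : nat) (hn : (2 <= n)%nat) (kappa : R) (hk : 0 < kappa) :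
  0 < beta n kappa.
Proof.
  destruct n as [|[|k]]; [lia|lia|].
  unfold beta, sigma_tilde, c.
  replace (S (S k) - 2)%nat with k by lia.
  rewrite (@RInt_ext R_CompleteNormedModule (fun t => cos t * exp (kappa * cos t) * sin t ^ k)
             (fun s => Pf kappa k s * cos s ^ 1)) by (intros; unfold Pf; simpl; ring).
  rewrite (@RInt_ext R_CompleteNormedModule (fun t => exp (kappa * cos t) * sin t ^ k)
             (fun s => Pf kappa k s * cos s ^ 0)) by (intros; unfold Pf; simpl; ring).
  fold (Pa kappa k 1) (Pa kappa k 0).
  pose proof (I1 kappa k) as H1. pose proof (I2 kappa k) as H2.
  pose proof (main_ineq kappa k hk) as H3. pose proof (P0_pos kappa k) as H4.
  pose proof (pos_INR k) as H5.
  rewrite S_INR in H1, H2. rewrite !S_INR.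
  set (P0 := Pa kappa k 0) in *. set (P1 := Pa kappa k 1) in *.
  set (P2 := Pa kappa k 2) in *. set (P3 := Pa kappa k 3) in *.
  assert (E2 : P2 = P0 - (INR k + 1) * P1 / kappa).
  { field_simplify_eq; lra. }
  assert (E3 : P3 = (P0 + kappa * P1 - (INR k + 1 + 1) * P2) / kappa).
  { field_simplify_eq; lra. }
  assert (EQ : (P1 / P0) ^ 2 + (INR k + 1 + 1) * (P1 / P0 / kappa) - 1
             = kappa * (P0 * P3 - P1 * P2) / ((INR k + 1) * P0 ^ 2)).
  { rewrite E3, E2. field. repeat split; lra. }
  rewrite EQ. apply Rdiv_lt_0_compat.
  - apply Rmult_lt_0_compat; lra.
  - apply Rmult_lt_0_compat; [lra|]. apply pow_lt; lra.
Qed.
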